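(* Let $N\ge2$. Let $\mathbf s=[s_1,\dots,s_{2^N}]^{\mathrm T}$ be given in TT format: $s_{(k_1,\dots,k_N)}=\sum_{r_1=1}^{R_1}\cdots\sum_{r_{N-1}=1}^{R_{N-1}}s^{(1)}_{1,k_1,r_1}s^{(2)}_{r_1,k_2,r_2}\cdots s^{(N)}_{r_{N-1},k_N,1}$ for $k_m\in\{1,2\}$, with $R_0=R_N=1$. Let $\mathbf H\in\mathbb R^{2^N\times2^N}$ be the upper anti-triangular Hankel matrix with entries $\mathbf H_{ij}=s_{2^N+1-i-j}$ if $i+j\le 2^N$ and $\mathbf H_{ij}=0$ otherwise (so its first row is $(s_{2^N-1},\dots,s_1,0)$). Let $$\mathbf P=\begin{bmatrix}0&1\\1&0\end{bmatrix},\quad\mathbf Q=\begin{bmatrix}1&0\\0&0\end{bmatrix},\quad\mathbf R=\begin{bmatrix}0&0\\0&1\end{bmatrix},$$ and define the block matrices $$\widetilde{\mathbf M}^{(N)}_1=\begin{bmatrix}\mathbf P&\mathbf Q\end{bmatrix},\ \widetilde{\mathbf M}^{(n)}_1=\begin{bmatrix}\mathbf P&\mathbf Q\\\mathbf 0&\mathbf R\end{bmatrix}\ (2\le n\le N-1),\ \widetilde{\mathbf M}^{(1)}_1=\begin{bmatrix}\mathbf Q\\\mathbf R\end{bmatrix},$$ $$\widetilde{\mathbf M}^{(N)}_2=\begin{bmatrix}\mathbf Q&\mathbf 0\end{bmatrix},\ \widetilde{\mathbf M}^{(n)}_2=\begin{bmatrix}\mathbf Q&\mathbf 0\\\mathbf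 R&\mathbf P\end{bmatrix}\ (2\le n\le N-1),\ \widetilde{\mathbf M}^{(1)}_2=\begin{bmatrix}\mathbf 0\\\mathbf P\end{bmatrix}.$$ Denote by $\mathbf M^{(n)}_{q_n,k,q_{n-1}}\in\mathbb R^{2\times2}$ the $(q_n,q_{n-1})$-th $2\times2$ block of $\widetilde{\mathbf M}^{(n)}_k$ (so $q_N=1$, $q_0=1$, and $q_n\in\{1,2\}$ for $1\le n\le N-1$). For $t_n=(r_n,q_n)$ define $$\mathbf H^{(n)}_{t_n,t_{n-1}}=\mathbf H^{(n)}_{(r_n,q_n),(r_{n-1},q_{n-1})}=\sum_{k=1}^{2}s^{(n)}_{r_{n-1},k,r_n}\mathbf M^{(n)}_{q_n,k,q_{n-1}}\in\mathbb R^{2\times2},$$ with $t_N=t_0=1$ meaning $(r,q)=(1,1)$. Then $$\mathbf H=\sum_{t_1}\cdots\sum_{t_{N-1}}\mathbf H^{(N)}_{1,t_{N-1}}\otimes\mathbf H^{(N-1)}_{t_{N-1},t_{N-2}}\otimes\cdots\otimes\mathbf H^{(1)}_{t_1,1},$$ where each $t_n$ ranges over the $2R_n$ pairs $(r_n,q_n)\in\{1,\dots,R_n\}\times\{1,2\}$.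
   Context: Multi-index convention: $(k_1,\dots,k_N)=k_1+2(k_2-1)+\cdots+2^{N-1}(k_N-1)$ for $k_m\in\{1,2\}$. $\otimes$ denotes the Kronecker product; in a Kronecker product $\mathbf X\otimes\mathbf Y$ the index of $\mathbf Y$ varies fastest. *)

(* Defs.v *)
From HB Require Import structures.
From mathcomp Require Import all_boot all_order all_algebra.
Unset Printing Implicit Defensive.
Import Order.TTheory GRing.Theory Num.Theory.
Local Open Scope ring_scope.

(* Conventions (all indices 0-based, i.e. paper index minus 1):
   - Rk n  = R_n  (n = 0..N), with R_0 = R_N = 1 as hypotheses of the theorem.
   - G n r k r' = s^{(n)}_{r+1, k+1, r'+1} for the core n (1 <= n <= N),
     r : 'I_(R_{n-1}), k : 'I_2, r' : 'I_(R_n).                             *)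

Section TT.
Variable R : nzRingType.
Variable Rk : nat -> nat.
Variable G : forall n : nat, 'I_(Rk n.-1) -> 'I_2 -> 'I_(Rk n) -> R.

(* Row vector of partial TT products s^{(1)}_{1,k_1,:} ... s^{(n)}_{:,k_n,:};
   kk m is the (0-based) value k_m - 1. *)
Fixpoint ttrow (kk : nat -> 'I_2) (n : nat) : 'rV[R]_(Rk n) :=
  match n with
  | 0 => const_mx 1
  | n'.+1 => ttrow kk n' *m \matrix_(i, j) @G n'.+1 i (kk n'.+1) j
  end.

(* The (0-based) digit k_m - 1 of the 0-based linear index p = (k_1,...,k_N) - 1,
   following (k_1,...,k_N) = k_1 + 2(k_2-1) + ... + 2^{N-1}(k_N-1). *)
Definition kdig (p : nat) (m : nat) : 'I_2 := inord ((p %/ 2 ^ m.-1) %% 2).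

(* s_{p+1} in TT format (the sum over j ranges over the single index r_N = 1). *)
Definition sval (N p : nat) : R := \sum_(j < Rk N) ttrow (kdig p) N 0 j.

Definition Hmat (N : nat) : 'M[R]_(2 ^ N) :=
  \matrix_(i, j) if (i + j + 2 <= 2 ^ N)%N then sval N (2 ^ N - 2 - i - j) else 0.

Definition Pm : 'M[R]_2 := \matrix_(i, j) (i != j)%:R.
Definition Qm : 'M[R]_2 := \matrix_(i, j) ((i == 0 :> nat) && (j == 0 :> nat))%:R.
Definition Rm : 'M[R]_2 := \matrix_(i, j) ((i == 1 :> nat) && (j == 1 :> nat))%:R.

(* Mblk N n q k q' = M^{(n)}_{q+1, k+1, q'+1}: the (q+1, q'+1)-th 2x2 block of
   \tilde M^{(n)}_{k+1}.  For n = N only q = 0 is meaningful; for n = 1 only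
   q' = 0 is meaningful. *)
Definition Mblk (N n : nat) (q k q' : 'I_2) : 'M[R]_2 :=
  let q0 := (q == 0 :> nat) in let k0 := (k == 0 :> nat) in
  let q'0 := (q' == 0 :> nat) in
  if n == N then
    (* ~M^{(N)}_1 = [P Q],  ~M^{(N)}_2 = [Q 0] *)
    (if k0 then (if q'0 then Pm else Qm) else (if q'0 then Qm else 0))
  else if n == 1%N then
    (* ~M^{(1)}_1 = [Q; R],  ~M^{(1)}_2 = [0; P] *)
    (if k0 then (if q0 then Qm else Rm) else (if q0 then 0 else Pm))
  else
    (* ~M^{(n)}_1 = [P Q; 0 R],  ~M^{(n)}_2 = [Q 0; R P] *)
    (if k0 then
       (if q0 then (if q'0 then Pm else Qm) else (if q'0 then 0 else Rm))
     else
       (if q0 then (if q'0 then Qm else 0) else (if q'0 then Rm else Pm))).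

Definition Hblk (N n : nat) (r : 'I_(Rk n)) (q : 'I_2) (r' : 'I_(Rk n.-1))
    (q' : 'I_2) : 'M[R]_2 :=
  \sum_(k < 2) @G n r' k r *: Mblk N n q k q'.

(* Kronecker product X (x) Y for a 2x2 matrix X: the block matrix [x_ij Y]
   (so the index of Y varies fastest). *)
Definition kron2 (d : nat) (X : 'M[R]_2) (Y : 'M[R]_d) : 'M[R]_(d + d) :=
  block_mx (X 0 0 *: Y) (X 0 1 *: Y) (X 1 0 *: Y) (X 1 1 *: Y).

Fixpoint dim (n : nat) : nat := if n is n'.+1 then (dim n' + dim n')%N else 1%N.

Lemma dimE n : dim n = (2 ^ n)%N.
Proof. by elim: n => //= n ->; rewrite expnS mul2n addnn. Qed.

(* Kchain N n t_n = sum_{t_{n-1}} ... sum_{t_1}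
       H^{(n)}_{t_n,t_{n-1}} (x) ... (x) H^{(1)}_{t_1,1},
   written recursively (Kronecker product is bilinear):
   Kchain (n+1) t = sum_{t'} H^{(n+1)}_{t,t'} (x) Kchain n t',
   where t' = (r', q') ranges over r' < R_n and q' in {1,2} if n >= 1,
   q' = 1 only if n = 0; Kchain 0 = [1] (1x1). *)
Fixpoint Kchain (N n : nat) : 'I_(Rk n) -> 'I_2 -> 'M[R]_(dim n) :=
  match n with
  | 0 => fun _ _ => 1%:M
  | n'.+1 => fun r q =>
      \sum_(r' < Rk n') \sum_(q' < 2 | (0 < n')%N || (q' == 0 :> nat))
         kron2 _ (@Hblk N n'.+1 r q r' q') (Kchain N n' r' q')
  end.

End TT.

Arguments Hmat {R Rk} G N.
Arguments Kchain {R Rk} G N n.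

(* Main.v *)
Require Import Defs.
From HB Require Import structures.
From mathcomp Require Import all_boot all_order all_algebra.
From mathcomp Require Import zify ring.
Import Order.TTheory GRing.Theory Num.Theory.
Local Open Scope ring_scope.

Definition cnd n q i j := ((i + j + 2 <= 2^n * q.+1) && (2^n * q.+1 < 2^n + (i + j + 2)))%N.
Definition pv n q i j := (2^n * q.+1 - (i + j + 2))%N.

Lemma divmod_small B k p : (p < B)%N -> ((k * B + p) %/ B = k /\ (k * B + p) %% B = p)%N.
Proof.
move=> hp; have B0 : (0 < B)%N by apply: leq_ltn_trans hp.
by rewrite divnMDl // divn_small // addn0 modnMDl modn_small.
Qed.

Lemma step_arith (R : nzRingType) n (a b q ii jj : nat) (F : nat -> nat -> R) :
 (a < 2)%N -> (b < 2)%N -> (q < 2)%N -> (ii < 2^n)%N -> (jj < 2^n)%N ->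
 \sum_(q' < 2) \sum_(k < 2) (((k + a + b + q' == 1 + 2*q)%N)%:R *
     (if cnd n q' ii jj then F k (pv n q' ii jj) else 0))
 = if cnd n.+1 q (a * 2^n + ii) (b * 2^n + jj)
   then F (pv n.+1 q (a*2^n+ii) (b*2^n+jj) %/ 2^n)%N (pv n.+1 q (a*2^n+ii) (b*2^n+jj) %% 2^n)%N
   else 0.
Proof.
move=> ha hb hq hi hj.
rewrite !big_ord_recr !big_ord0 /= !add0r.
have cn0 : cnd n 0 ii jj = (ii + jj + 2 <= 2^n)%N.
  by rewrite /cnd; apply/andP/idP => [[]|]; lia.
have cn1 : cnd n 1 ii jj = (2^n < ii + jj + 2)%N.
  by rewrite /cnd; apply/andP/idP => [[]|]; lia.
rewrite cn0 cn1 /pv /cnd expnS.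
move: hi hj; set B := (2^n)%N => hi hj.
have B0 : (0 < B)%N by lia.
case: a ha => [|[|//]] _; case: b hb => [|[|//]] _; case: q hq => [|[|//]] _ /=;
 rewrite ?mul1r ?mul0r ?addr0 ?add0r;
 (case: (leqP (ii + jj + 2) B) => hS; rewrite /= ?mul1r ?mul0r ?addr0 ?add0r);
 case: ifP => H //.
all: try by (exfalso; move: H hS hi hj; lia).
all: try by (move: H hS hi hj; lia).
all: lazymatch goal with |- ?f ?k ?p = ?f (?X %/ _)%N _ =>
  have [e1 e2] : (X %/ B = k /\ X %% B = p)%N by
     (have -> : X = (k * B + p)%N by lia); apply: divmod_small; lia
  end; by rewrite e1 e2.
Qed.
Lemma MblkE (R : nzRingType) N n (q k q' a b : 'I_2) : (1 < n)%N ->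
  Mblk R N n q k q' a b = ((k + a + b + q' == 1 + 2 * (if n == N then 0 else q))%N)%:R.
Proof.
move=> hn; rewrite /Mblk (_ : (n == 1%N) = false); last by apply/eqP; lia.
case: (n == N);
case: q => [[|[|//]] ?]; case: k => [[|[|//]] ?]; case: q' => [[|[|//]] ?];
case: a => [[|[|//]] ?]; case: b => [[|[|//]] ?]; by rewrite /= ?mxE.
Qed.

Lemma Mblk1 (R : nzRingType) N (q k q' a b : 'I_2) : N != 1%N ->
  Mblk R N 1 q k q' a b = ((k + a + b + 1 == 1 + 2 * q)%N)%:R.
Proof.
move=> hN; rewrite /Mblk eq_sym (negbTE hN) eqxx.
case: q => [[|[|//]] ?]; case: k => [[|[|//]] ?]; case: q' => [[|[|//]] ?];
case: a => [[|[|//]] ?]; case: b => [[|[|//]] ?]; by rewrite /= ?mxE.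
Qed.

Definition idx d (a : 'I_2) (ii : 'I_d) : 'I_(d + d) :=
  if (a == 0 :> nat) then lshift d ii else rshift d ii.

Lemma idx_val d a ii : (idx d a ii : nat) = (a * d + ii)%N.
Proof. by rewrite /idx; case: a => [[|[|//]] ?] /=; rewrite ?mul0n ?mul1n. Qed.

Lemma idx_val2 m a (ii : 'I_(Defs.dim m)) : (idx (Defs.dim m) a ii : nat) = (a * 2 ^ m + ii)%N.
Proof. rewrite idx_val; congr (a * _ + _)%N; exact: dimE. Qed.

Lemma idx_val3 m a (ii : 'I_(Defs.dim m)) :
  @nat_of_ord (Defs.dim m.+1) (idx (Defs.dim m) a ii) = (a * 2 ^ m + ii)%N.
Proof. exact: idx_val2. Qed.

Lemma idx_surj d (i : 'I_(d + d)) : exists a ii, i = idx d a ii.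
Proof.
case: (splitP i) => [ii Hi|ii Hi]; [exists 0, ii | exists 1, ii];
  by apply: ord_inj; rewrite idx_val Hi ?mul0n ?mul1n.
Qed.

Lemma kron2E (R : nzRingType) d X Y a b ii jj :
  kron2 R d X Y (idx d a ii) (idx d b jj) = X a b * Y ii jj.
Proof.
rewrite /kron2 /idx.
case: a => [[|[|//]] ha]; case: b => [[|[|//]] hb] /=;
rewrite ?block_mxEul ?block_mxEur ?block_mxEdl ?block_mxEdr mxE;
by congr (X _ _ * _); apply: val_inj.
Qed.

Lemma eq_ttrow (R : nzRingType) Rk G kk kk' n :
  (forall m, (0 < m <= n)%N -> kk m = kk' m) ->
  ttrow R Rk G kk n = ttrow R Rk G kk' n.
Proof.
elim: n => [|n IH] h //=.
rewrite (h n.+1) ?leqnn // IH // => m /andP[m0 mn]; apply: h; rewrite m0 /=; exact: leqW.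
Qed.

Lemma kdig_mod p n m : (0 < m <= n)%N -> kdig (p %% 2 ^ n) m = kdig p m.
Proof.
move=> /andP[m0 mn]; rewrite /kdig; congr inord.
have -> : (2 ^ n = 2 ^ (n - m.-1) * 2 ^ m.-1)%N by rewrite -expnD subnK //; lia.
rewrite -modn_divl; apply: modn_dvdm.
by rewrite -{1}(expn1 2) dvdn_exp2l //; lia.
Qed.

Lemma sum2 (R : nzRingType) (F : 'I_2 -> R) : \sum_(i < 2) F i = F 0 + F 1.
Proof. by rewrite big_ord_recl big_ord1; congr (F _ + F _); apply: val_inj. Qed.

Lemma KchainS (R : nzRingType) N (Rk : nat -> nat)
  (G : forall n : nat, 'I_(Rk n.-1) -> 'I_2 -> 'I_(Rk n) -> R) n r q :
  Kchain G N n.+1 r q = \sum_(r' < Rk n) \sum_(q' < 2 | (0 < n)%N || (q' == 0 :> nat))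
     kron2 R _ (Hblk R Rk G N n.+1 r q r' q') (Kchain G N n r' q').
Proof. by []. Qed.

Definition KF (R : nzRingType) Rk G n (r : 'I_(Rk n)) (q i j : nat) : R :=
  if cnd n q i j then ttrow R Rk G (kdig (pv n q i j)) n 0 r else 0.

Lemma KchainE (R : comNzRingType) N (Rk : nat -> nat)
  (G : forall n : nat, 'I_(Rk n.-1) -> 'I_2 -> 'I_(Rk n) -> R) n : (2 <= N)%N -> (n < N)%N ->
  forall r (q : 'I_2) (i j : 'I_(Defs.dim n.+1)),
  Kchain G N n.+1 r q i j = KF R Rk G n.+1 r (if n.+1 == N then 0%N else q) i j.
Proof.
move=> hN; have hN1 : N != 1%N by apply/eqP; lia.
elim: n => [|n IH] hn r q i j.
- have [a [ii e]] := @idx_surj (Defs.dim 0) i; subst i.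
  have [b [jj e]] := @idx_surj (Defs.dim 0) j; subst j.
  rewrite (_ : (1 == N) = false); last by apply/eqP; lia.
  rewrite /= summxE.
  under eq_bigr => r' _ do rewrite summxE big_mkcond sum2 /= addr0 kron2E.
  rewrite (ord1 ii) (ord1 jj) mxE /= /KF !idx_val /= !addn0 !muln1.
  under eq_bigr => r' _ do rewrite mulr1 /Hblk summxE.
  under eq_bigr => r' _ do under eq_bigr => k _ do rewrite mxE Mblk1 //.
  pose F (k p : nat) := \sum_(r' < Rk 0%N) G 1%N r' (inord (k %% 2)) r.
  transitivity (\sum_(q' < 2) \sum_(k < 2) (((k + a + b + q' == 1 + 2 * q)%N)%:R *
     (if cnd 0 q' 0 0 then F k (pv 0 q' 0 0) else 0))).
    rewrite sum2 /= /cnd /= [X in _ = X + _]big1 ?add0r; last by move=> k _; rewrite mulr0.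
    change (1 %% 2)%N with 1%N.
    rewrite exchange_big /=; apply: eq_bigr => k _.
    rewrite /F mulr_sumr; apply: eq_bigr => r' _.
    by rewrite mulrC modn_small // inord_val.
  rewrite step_arith // ?expn0 ?muln1 ?addn0 ?divn1 ?modn1.
  case: ifP => // _; rewrite mxE /F /kdig /= expn0 divn1.
  by apply: eq_bigr => r' _; rewrite mxE mxE mul1r.
- have [a [ii e]] := @idx_surj (Defs.dim n.+1) i; subst i.
  have [b [jj e]] := @idx_surj (Defs.dim n.+1) j; subst j.
  have hn1 : (n.+1 == N) = false by apply/eqP; lia.
  rewrite KchainS summxE.
  under eq_bigr => r' _ do rewrite summxE big_mkcond /=.
  under eq_bigr => r' _ do under eq_bigr => q' _ do rewrite kron2E IH ?hn1 1?ltnW // /Hblk summxE.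
  under eq_bigr => r' _ do under eq_bigr => q' _ do under eq_bigr => k _ do rewrite mxE MblkE //.
  set qq := (if n.+2 == N then _ else _).
  have hqq : (qq < 2)%N by rewrite /qq; case: ifP.
  have hii : (ii < 2 ^ n.+1)%N by rewrite -dimE.
  have hjj : (jj < 2 ^ n.+1)%N by rewrite -dimE.
  pose F (k p : nat) := \sum_(r' < Rk n.+1) ttrow R Rk G (kdig p) n.+1 0 r' * G n.+2 r' (inord (k %% 2)) r.
  transitivity (\sum_(q' < 2) \sum_(k < 2) (((k + a + b + q' == 1 + 2 * qq)%N)%:R *
     (if cnd n.+1 q' ii jj then F k (pv n.+1 q' ii jj) else 0))).
    rewrite exchange_big; apply: eq_bigr => q' _.
    rewrite /KF; case: (cnd n.+1 q' ii jj); last first.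
      rewrite big1 => [|r' _]; last by rewrite mulr0.
      by rewrite big1 => [|k _]; last by rewrite mulr0.
    under eq_bigr => r' _ do rewrite mulr_suml.
    rewrite exchange_big; apply: eq_bigr => k _.
    rewrite /F mulr_sumr; apply: eq_bigr => r' _.
    rewrite modn_small // inord_val; ring.
  rewrite step_arith // /KF !idx_val3.
  case: ifP => // _.
  set P := pv n.+2 qq _ _.
  have -> : ttrow R Rk G (kdig P) n.+2 =
     ttrow R Rk G (kdig P) n.+1 *m \matrix_(i, j) G n.+2 i (kdig P n.+2) j by [].
  rewrite mxE /F; apply: eq_bigr => r' _.
  rewrite (@eq_ttrow _ _ _ (kdig P) (kdig (P %% 2 ^ n.+1)%N)); last first.
    by move=> m hm; rewrite kdig_mod.
  by rewrite [X in _ = _ * X]mxE.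
Qed.

Lemma KchainE' (R : comNzRingType) N (Rk : nat -> nat)
  (G : forall n : nat, 'I_(Rk n.-1) -> 'I_2 -> 'I_(Rk n) -> R) m :
  (2 <= N)%N -> (0 < m <= N)%N ->
  forall r (q : 'I_2) (i j : 'I_(Defs.dim m)),
  Kchain G N m r q i j = KF R Rk G m r (if m == N then 0%N else q) i j.
Proof.
case: m => [|n] hN hm r q i j //; apply: KchainE => //; lia.
Qed.

Theorem mainTheorem6 (R : realFieldType) (N : nat) (Rk : nat -> nat)
    (G : forall n : nat, 'I_(Rk n.-1) -> 'I_2 -> 'I_(Rk n) -> R)
    (hN : (2 <= N)%N) (hR0 : Rk 0%N = 1%N) (hRN : Rk N = 1%N) :
  Hmat G N =
  castmx (dimE N, dimE N) (\sum_(r < Rk N) Kchain G N N r 0).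
Proof.
apply/matrixP => i j; rewrite castmxE summxE mxE.
have hNN : (0 < N <= N)%N by apply/andP; split; lia.
under eq_bigr => r _ do rewrite KchainE' // eqxx.
rewrite /KF /=.
have -> : cnd N 0 i j = (i + j + 2 <= 2 ^ N)%N.
  by rewrite /cnd; apply/andP/idP => [[]|]; lia.
case: ifP => h; last by rewrite big1.
have -> : pv N 0 i j = (2 ^ N - 2 - i - j)%N by rewrite /pv; lia.
by rewrite /sval.
Qed.
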